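(* Let $M^4$ be a smooth $4$-manifold, $\sigma$ a smooth non-constant function on $M^4$ with $\sigma_i:=\partial\sigma/\partial x^i$, $\sigma_{ij}:=\partial^2\sigma/\partial x^i\partial x^j$, and $h_{11}(t)>0$ a Riemannian metric on $\mathbb{R}$. On the domain of $J^{1*}(\mathbb{R},M^4)$ where $\mathcal{P}^{1111}:=p^1_1p^1_2p^1_3p^1_4>0$, consider $\overset{*}{H}=4e^{-2\sigma(x)}h_{11}(t)[\mathcal{P}^{1111}]^{1/2}$ and its Cartan canonical connection with components $H^i_{jk}=4\delta^i_j\delta^i_k\sigma_i$, $C^{j(k)}_{i(1)}=\mathsf{C}^{jk}_i\frac{p^1_i}{p^1_jp^1_k}$ (no sums), $\mathsf{C}^{jk}_i=\frac{1-2\delta^{jk}-2\delta^j_i-2\delta^k_i+8\delta^j_i\delta^k_i}{8}$. Then the Ricci d-tensors $$R_{ij}:=\frac{\delta H^m_{ij}}{\delta x^m}-\frac{\delta H^m_{im}}{\delta x^j}+H^r_{ij}H^m_{rm}-H^r_{im}H^m_{rj}+C^{m(r)}_{i(1)}R^{(1)}_{(r)jm},\qquad S^{(i)(j)}_{(1)(1)}:=\frac{\partial C^{i(j)}_{m(1)}}{\partial p^1_m}-\frac{\partial C^{i(m)}_{m(1)}}{\partial p^1_j}+C^{r(j)}_{m(1)}C^{i(m)}_{r(1)}-C^{r(m)}_{m(1)}C^{i(j)}_{r(1)}$$ (summation over $m,r$) are given by (no sums over $i,j,k,l$) $$R_{ij}=\begin{cases}-2\sigma_{ij}-\dfrac{p^1_i}{p^1_k}\sigma_{jk}-\dfrac{p^1_i}{p^1_l}\sigma_{jl},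 & i\neq j,\ \{i,j,k,l\}=\{1,2,3,4\},\\[2mm] 0,& i=j,\end{cases}\qquad R^{(i)(j)}_{(1)(1)}=-S^{(i)(j)}_{(1)(1)}=\frac{4\delta^{ij}-1}{8}\frac{1}{p^1_ip^1_j}.$$
   Context: The nonlinear connection is $\underset{2}{N}{}^{(1)}_{(i)j}=-4\sigma_ip^1_i\delta_{ij}$ (no sum), with adapted vector fields $\frac{\delta}{\delta x^i}=\frac{\partial}{\partial x^i}+4\sigma_ip^1_i\frac{\partial}{\partial p^1_i}$ (no sum over $i$). The torsion d-tensor is $R^{(1)}_{(r)ij}=\frac{\delta \underset{2}{N}{}^{(1)}_{(r)i}}{\delta x^j}-\frac{\delta \underset{2}{N}{}^{(1)}_{(r)j}}{\delta x^i}$. Here $R^{(i)(j)}_{(1)(1)}$ denotes the vertical Ricci d-tensor of the Cartan canonical connection, which equals $-S^{(i)(j)}_{(1)(1)}$. *)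

(* Defs.v *)
From HB Require Import structures.
From mathcomp Require Import all_boot all_order all_algebra.
From mathcomp Require Import all_classical all_reals all_analysis.
Set Implicit Arguments. Unset Strict Implicit. Unset Printing Implicit Defensive.
Import Order.TTheory GRing.Theory Num.Theory.
Import numFieldNormedType.Exports.
Local Open Scope classical_set_scope.
Local Open Scope ring_scope.

Section Defs.
Variable R : realType.
Notation V := 'rV[R]_4.

Definition kd (i j : 'I_4) : R := if i == j then 1 else 0.

Definition pd (i : 'I_4) (f : V -> R) (x : V) : R := 'D_(delta_mx 0 i) f x.

Fixpoint iter_pd (l : seq 'I_4) (f : V -> R) : V -> R :=
  if l is i :: l' then pd i (iter_pd l' f) else f.

Definition smooth_on (U : set V) (f : V -> R) : Prop :=
  forall (l : seq 'I_4) (x : V), U x -> differentiable (iter_pd l f) x.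

Variable sigma : V -> R.

Definition sig1 (i : 'I_4) (x : V) : R := pd i sigma x.
Definition sig2 (i j : 'I_4) (x : V) : R := pd i (pd j sigma) x.

(* d-tensors are functions of (x, p), x in M^4 (chart), p = (p^1_i) *)
(* nonlinear connection N^(1)_(i)j = -4 sigma_i p^1_i delta_ij *)
Definition Nc (i j : 'I_4) (x p : V) : R := - 4 * sig1 i x * p 0 i * kd i j.

Definition deltaX (i : 'I_4) (F : V -> V -> R) (x p : V) : R :=
  pd i (fun y => F y p) x + 4 * sig1 i x * p 0 i * pd i (fun q => F x q) p.

Definition dP (i : 'I_4) (F : V -> V -> R) (x p : V) : R := pd i (fun q => F x q) p.

Definition Rtor (r i j : 'I_4) (x p : V) : R :=
  deltaX j (Nc r i) x p - deltaX i (Nc r j) x p.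

Definition Hc (i j k : 'I_4) (x p : V) : R := 4 * kd i j * kd i k * sig1 i x.

Definition Cs (i j k : 'I_4) : R :=
  (1 - 2 * kd j k - 2 * kd j i - 2 * kd k i + 8 * kd j i * kd k i) / 8.

(* C^{j(k)}_{i(1)} = Cs^{jk}_i p_i / (p_j p_k) *)
Definition Cc (j k i : 'I_4) (x p : V) : R := Cs i j k * p 0 i / (p 0 j * p 0 k).

Definition RicH (i j : 'I_4) (x p : V) : R :=
  \sum_(m < 4) deltaX m (Hc m i j) x p
  - \sum_(m < 4) deltaX j (Hc m i m) x p
  + \sum_(r < 4) \sum_(m < 4) Hc r i j x p * Hc m r m x p
  - \sum_(r < 4) \sum_(m < 4) Hc r i m x p * Hc m r j x p
  + \sum_(m < 4) \sum_(r < 4) Cc m r i x p * Rtor r j m x p.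

Definition Svert (i j : 'I_4) (x p : V) : R :=
  \sum_(m < 4) dP m (Cc i j m) x p
  - \sum_(m < 4) dP j (Cc i m m) x p
  + \sum_(m < 4) \sum_(r < 4) Cc r j m x p * Cc i m r x p
  - \sum_(m < 4) \sum_(r < 4) Cc r m m x p * Cc i j r x p.

Definition RicV (i j : 'I_4) (x p : V) : R := - Svert i j x p.

End Defs.

Definition Hstar (R : realType) (sigma : 'rV[R]_4 -> R) (h : R -> R)
  (t : R) (x p : 'rV[R]_4) : R :=
  4 * expR (- 2 * sigma x) * h t * Num.sqrt (\prod_(i < 4) p 0 i).

(* Main.v *)
Require Import Defs.
From HB Require Import structures.
From mathcomp Require Import all_boot all_order all_algebra.
From mathcomp Require Import all_classical all_reals all_analysis.
From mathcomp Require Import ring lra.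
Import Order.TTheory GRing.Theory Num.Theory.
Import numFieldNormedType.Exports.
Local Open Scope classical_set_scope.
Local Open Scope ring_scope.

Definition o0 : 'I_4 := @Ordinal 4 0 isT.
Definition o1 : 'I_4 := @Ordinal 4 1 isT.
Definition o2 : 'I_4 := @Ordinal 4 2 isT.
Definition o3 : 'I_4 := @Ordinal 4 3 isT.

Lemma ord4P (i : 'I_4) : [\/ i = o0, i = o1, i = o2 | i = o3].
Proof.
case: i => [[|[|[|[|n]]]] Hi].
- by apply: Or41; apply: val_inj.
- by apply: Or42; apply: val_inj.
- by apply: Or43; apply: val_inj.
- by apply: Or44; apply: val_inj.
- by [].
Qed.

Section Alg.
Variable R : realType.

Lemma sum4 (F : 'I_4 -> R) : \sum_(m < 4) F m = F o0 + F o1 + F o2 + F o3.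
Proof.
rewrite !big_ord_recr big_ord0 /= add0r.
by congr (_ + _ + _ + _); congr F; apply: val_inj.
Qed.

Definition CcF (P : 'I_4 -> R) (j k i : 'I_4) : R := Cs R i j k * P i / (P j * P k).
Definition dCf (P : 'I_4 -> R) (j k i m : 'I_4) : R :=
  Cs R i j k * (kd R i m / (P j * P k) - P i * (kd R j m * P k + P j * kd R k m) / (P j * P k) ^+ 2).

Definition SVform (P : 'I_4 -> R) (i j : 'I_4) : R :=
  \sum_(m < 4) dCf P i j m m
  - \sum_(m < 4) dCf P i m m j
  + \sum_(m < 4) \sum_(r < 4) CcF P r j m * CcF P i m r
  - \sum_(m < 4) \sum_(r < 4) CcF P r m m * CcF P i j r.

Lemma vert_alg (P : 'I_4 -> R) (i j : 'I_4) : (forall a, P a != 0) ->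
  - SVform P i j = (4 * kd R i j - 1) / 8 * (1 / (P i * P j)).
Proof.
move=> Pnz.
have h0 := Pnz o0; have h1 := Pnz o1; have h2 := Pnz o2; have h3 := Pnz o3.
rewrite /SVform !sum4 /dCf /CcF.
case: (ord4P i) => ->; case: (ord4P j) => ->; rewrite /Cs /kd /=;
  by field; rewrite ?h0 ?h1 ?h2 ?h3.
Qed.

Definition RHform (S : 'I_4 -> 'I_4 -> R) (s P : 'I_4 -> R) (i j : 'I_4) : R :=
  \sum_(m < 4) 4 * kd R m i * kd R m j * S m m
  - \sum_(m < 4) 4 * kd R m i * kd R m m * S j m
  + \sum_(r < 4) \sum_(m < 4) (4 * kd R r i * kd R r j * s r) * (4 * kd R m r * kd R m m * s m)
  - \sum_(r < 4) \sum_(m < 4) (4 * kd R r i * kd R r m * s r) * (4 * kd R m r * kd R m j * s m)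
  + \sum_(m < 4) \sum_(r < 4) CcF P m r i *
      (4 * P r * (kd R r m * S j r - kd R r j * S m r)
       + 16 * s r * (s j * P j - s m * P m) * kd R r j * kd R r m).

Lemma horiz_diag (S : 'I_4 -> 'I_4 -> R) (s P : 'I_4 -> R) (i : 'I_4) :
  (forall a b, S a b = S b a) -> (forall a, P a != 0) -> RHform S s P i i = 0.
Proof.
move=> Ss Pnz.
have h0 := Pnz o0; have h1 := Pnz o1; have h2 := Pnz o2; have h3 := Pnz o3.
rewrite /RHform !sum4 /CcF.
case: (ord4P i) => ->; rewrite /Cs /kd /=;
  rewrite ?(Ss o1 o0) ?(Ss o2 o0) ?(Ss o3 o0) ?(Ss o2 o1) ?(Ss o3 o1) ?(Ss o3 o2);
  by field; rewrite ?h0 ?h1 ?h2 ?h3.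
Qed.

Lemma horiz_off (S : 'I_4 -> 'I_4 -> R) (s P : 'I_4 -> R) (i j k l : 'I_4) :
  (forall a b, S a b = S b a) -> (forall a, P a != 0) ->
  [&& i != j, k != i, k != j, l != i, l != j & l != k] ->
  RHform S s P i j = - 2 * S i j - P i / P k * S j k - P i / P l * S j l.
Proof.
move=> Ss Pnz.
have h0 := Pnz o0; have h1 := Pnz o1; have h2 := Pnz o2; have h3 := Pnz o3.
rewrite /RHform !sum4 /CcF.
case: (ord4P i) => ->; case: (ord4P j) => ->; case: (ord4P k) => ->; case: (ord4P l) => ->;
  move=> //= _; rewrite /Cs /kd /=;
  rewrite ?(Ss o1 o0) ?(Ss o2 o0) ?(Ss o3 o0) ?(Ss o2 o1) ?(Ss o3 o1) ?(Ss o3 o2);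
  by field; rewrite ?h0 ?h1 ?h2 ?h3.
Qed.

End Alg.

Section Sch.
Variable R : realType.
Notation V := 'rV[R]_4.

Lemma line_is_derive (f : V -> R) (u w : V) (s : R) :
  derivable f (s *: u + w) u ->
  is_derive s 1 (fun t : R => f (t *: u + w)) ('D_u f (s *: u + w)).
Proof.
have E : (fun h : R => h^-1 *: (((fun t : R => f (t *: u + w)) \o shift s) (h *: 1)
             - f (s *: u + w))) =
         (fun h : R => h^-1 *: ((f \o shift (s *: u + w)) (h *: u) - f (s *: u + w))).
  apply/funext => h /=; congr (_ *: (f _ - _)).
  by rewrite scalerDl addrA [h *: (1:R)]mulr1.
move=> df; split; first by rewrite /derivable E.
by rewrite /derive E.
Qed.

Lemma mvt2 (g1 g2 : V -> R) (w z1 z2 : V) (h : R) : 0 < h ->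
  (forall s, 0 <= s <= h -> derivable g1 (s *: w + z1) w /\ derivable g2 (s *: w + z2) w) ->
  exists2 c, 0 < c < h &
   (g1 (h *: w + z1) - g2 (h *: w + z2)) - (g1 z1 - g2 z2) =
   ('D_w g1 (c *: w + z1) - 'D_w g2 (c *: w + z2)) * h.
Proof.
move=> h0 Hd.
pose phi := (fun s : R => g1 (s *: w + z1)) - (fun s : R => g2 (s *: w + z2)).
have D : forall s, 0 <= s <= h ->
  is_derive s 1 phi ('D_w g1 (s *: w + z1) - 'D_w g2 (s *: w + z2)).
  move=> s /Hd [d1 d2]; apply: is_deriveB; exact: line_is_derive.
have C : {within `[0, h], continuous phi}.
  apply: continuous_in_subspaceT => s; rewrite inE /= in_itv /= => sI.
  have := D s sI => -[dr _].
  exact/differentiable_continuous/derivable1_diffP.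
have D' : forall s, s \in `]0, h[ ->
  is_derive s 1 phi ('D_w g1 (s *: w + z1) - 'D_w g2 (s *: w + z2)).
  by move=> s; rewrite in_itv /= => /andP[/ltW a /ltW b]; apply: D; rewrite a b.
have [c cI E] := @MVT R phi _ 0 h h0 D' C.
exists c; first by move: cI; rewrite in_itv.
move: E; rewrite /phi !fctE !scale0r !add0r subr0 => <-. by [].
Qed.

Lemma norm_delta (a : 'I_4) : `|delta_mx 0 a : V| <= 1.
Proof.
rewrite [leLHS]/Num.Def.normr /= mx_normrE; apply: bigmax_le => // ij _; rewrite mxE.
by case: (_ && _); rewrite ?normr1 ?normr0.
Qed.

Lemma dist_pt (a b : 'I_4) (s t : R) (x : V) :
  `|x - (s *: delta_mx 0 a + (t *: delta_mx 0 b + x))| <= `|s| + `|t|.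
Proof.
rewrite addrA opprD addrCA subrr addr0 normrN.
apply: le_trans (ler_normD _ _) _.
rewrite !normrZ lerD //.
- by rewrite -[leRHS]mulr1 ler_wpM2l // norm_delta.
- by rewrite -[leRHS]mulr1 ler_wpM2l // norm_delta.
Qed.

Lemma near_pts (U : set V) (x : V) (a b : 'I_4) : open U -> U x ->
  exists2 r, 0 < r & forall s t : R, `|s| < r -> `|t| < r ->
     U (s *: delta_mx 0 a + (t *: delta_mx 0 b + x)).
Proof.
move=> oU Ux.
have /nbhs_ballP [r r0 Hr] : nbhs x U by apply: open_nbhs_nbhs; split.
exists (r / 2); first by rewrite divr_gt0.
move=> s t hs ht; apply: Hr; rewrite -ball_normE /=.
apply: le_lt_trans (dist_pt a b s t x) _.
lra.
Qed.

Lemma cont_ball (D : V -> R) (x : V) (e : R) : differentiable D x -> 0 < e ->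
  exists2 d, 0 < d & forall y, `|x - y| < d -> `|D x - D y| < e.
Proof.
move=> dD e0.
have := differentiable_continuous dD.
move=> /cvgrPdist_lt /(_ e e0) /nbhs_ballP [d d0 Hd].
exists d => // y hy; apply: Hd; rewrite -ball_normE /=; exact: hy.
Qed.

Lemma small_eq0 (z : R) : (forall e, 0 < e -> `|z| < 2 * e) -> z = 0.
Proof.
move=> H; case: (eqVneq z 0) => // nz.
have zp : 0 < `|z| by rewrite normr_gt0.
have h4 : 0 < `|z| / 4 by rewrite divr_gt0.
have := H _ h4.
lra.
Qed.

Lemma alg_aux (D1 D2 F1 F2 F3 F4 h : R) : h != 0 ->
  F1 - F2 - (F3 - F4) = D1 * h * h -> F1 - F3 - (F2 - F4) = D2 * h * h -> D1 = D2.
Proof.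
move=> h0 E1 E2; have hh : h * h != 0 by rewrite mulf_neq0.
apply: (mulIf hh); rewrite !mulrA -E1 -E2; ring.
Qed.

Lemma tri_aux (A B X Y e : R) : `|A - Y| < e -> `|B - X| < e -> X = Y -> `|A - B| < 2 * e.
Proof.
move=> k2 k1 E; rewrite E in k1.
apply: le_lt_trans (ler_distD Y _ _) _.
rewrite [X in _ + X]distrC; lra.
Qed.

Lemma dist_aux (s t h d : R) : `|s| <= h -> `|t| <= h -> 2 * h < d -> `|s| + `|t| < d.
Proof. lra. Qed.

Lemma cle_aux (c h : R) : 0 < c < h -> `|c| <= h.
Proof. by move=> /andP[c0 ch]; rewrite gtr0_norm // ltW. Qed.

Lemma schwarz (f : V -> R) (U : set V) (a b : 'I_4) (x : V) : open U -> U x ->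
  (forall z, U z -> differentiable f z) ->
  (forall z, U z -> differentiable (pd a f) z) ->
  (forall z, U z -> differentiable (pd b f) z) ->
  differentiable (pd a (pd b f)) x -> differentiable (pd b (pd a f)) x ->
  pd a (pd b f) x = pd b (pd a f) x.
Proof.
move=> oU Ux df dfa dfb d2 d1.
have [r r0 Ur] := near_pts U x a b oU Ux.
have Ur' : forall s t : R, `|s| < r -> `|t| < r ->
     U (s *: delta_mx 0 b + (t *: delta_mx 0 a + x)).
  by move=> s t hs ht; rewrite addrCA; apply: Ur.
apply/eqP; rewrite -subr_eq0; apply/eqP/small_eq0 => e e0.
have [d1' d10 H1] := cont_ball _ _ _ d1 e0.
have [d2' d20 H2] := cont_ball _ _ _ d2 e0.
pose h := Num.min (Num.min r d1') d2' / 4.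
have h0 : 0 < h by rewrite /h divr_gt0 // !lt_min r0 d10 d20.
have hr : h < r.
  have : Num.min (Num.min r d1') d2' <= r by rewrite !ge_min lexx.
  rewrite /h; lra.
have hd1 : 2 * h < d1'.
  have : Num.min (Num.min r d1') d2' <= d1' by rewrite !ge_min lexx orbT.
  rewrite /h; lra.
have hd2 : 2 * h < d2'.
  have : Num.min (Num.min r d1') d2' <= d2' by rewrite !ge_min lexx orbT.
  rewrite /h; lra.
have sI : forall s, 0 <= s <= h -> `|s| < r.
  by move=> s /andP[s0 sh]; rewrite ger0_norm //; apply: le_lt_trans hr.
have hI : `|h| < r by rewrite gtr0_norm.
have zI : `|0 : R| < r by rewrite normr0.
have Ua : forall s, `|s| < r -> U (s *: delta_mx 0 a + x).
  by move=> s hs; have := Ur s 0 hs zI; rewrite scale0r add0r.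
have Ub : forall s, `|s| < r -> U (s *: delta_mx 0 b + x).
  by move=> s hs; have := Ur' s 0 hs zI; rewrite scale0r add0r.
have [c1 c1I E1] : exists2 c, 0 < c < h &
   (f (h *: delta_mx 0 a + (h *: delta_mx 0 b + x)) - f (h *: delta_mx 0 a + x))
    - (f (h *: delta_mx 0 b + x) - f x) =
   (pd a f (c *: delta_mx 0 a + (h *: delta_mx 0 b + x)) - pd a f (c *: delta_mx 0 a + x)) * h.
  apply: mvt2 => // s Hs; split; apply: diff_derivable; apply: df.
    by apply: Ur => //; apply: sI.
  by apply: Ua; apply: sI.
have c1r : `|c1| < r by apply: sI; case/andP: c1I => /ltW -> /ltW ->.
have [c2 c2I E2] : exists2 c, 0 < c < h &
   (pd a f (h *: delta_mx 0 b + (c1 *: delta_mx 0 a + x)) - (fun _ => 0 : R) (h *: delta_mx 0 b + x))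
    - (pd a f (c1 *: delta_mx 0 a + x) - (fun _ => 0 : R) x) =
   ('D_(delta_mx 0 b) (pd a f) (c *: delta_mx 0 b + (c1 *: delta_mx 0 a + x))
     - 'D_(delta_mx 0 b) (fun _ => 0 : R) (c *: delta_mx 0 b + x)) * h.
  apply: mvt2 => // s Hs; split; last exact: derivable_cst.
  by apply: diff_derivable; apply: dfa; apply: Ur' => //; apply: sI.
have [c3 c3I E3] : exists2 c, 0 < c < h &
   (f (h *: delta_mx 0 b + (h *: delta_mx 0 a + x)) - f (h *: delta_mx 0 b + x))
    - (f (h *: delta_mx 0 a + x) - f x) =
   (pd b f (c *: delta_mx 0 b + (h *: delta_mx 0 a + x)) - pd b f (c *: delta_mx 0 b + x)) * h.
  apply: mvt2 => // s Hs; split; apply: diff_derivable; apply: df.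
    by apply: Ur' => //; apply: sI.
  by apply: Ub; apply: sI.
have c3r : `|c3| < r by apply: sI; case/andP: c3I => /ltW -> /ltW ->.
have [c4 c4I E4] : exists2 c, 0 < c < h &
   (pd b f (h *: delta_mx 0 a + (c3 *: delta_mx 0 b + x)) - (fun _ => 0 : R) (h *: delta_mx 0 a + x))
    - (pd b f (c3 *: delta_mx 0 b + x) - (fun _ => 0 : R) x) =
   ('D_(delta_mx 0 a) (pd b f) (c *: delta_mx 0 a + (c3 *: delta_mx 0 b + x))
     - 'D_(delta_mx 0 a) (fun _ => 0 : R) (c *: delta_mx 0 a + x)) * h.
  apply: mvt2 => // s Hs; split; last exact: derivable_cst.
  by apply: diff_derivable; apply: dfb; apply: Ur => //; apply: sI.
rewrite !subr0 derive_cst subr0 in E2.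
rewrite !subr0 derive_cst subr0 in E4.
rewrite [c1 *: delta_mx 0 a + (h *: _ + _)]addrCA E2 in E1.
rewrite [c3 *: delta_mx 0 b + (h *: _ + _)]addrCA E4 in E3.
rewrite [h *: delta_mx 0 b + (h *: _ + _)]addrCA in E3.
have E : 'D_(delta_mx 0 b) (pd a f) (c2 *: delta_mx 0 b + (c1 *: delta_mx 0 a + x)) =
         'D_(delta_mx 0 a) (pd b f) (c4 *: delta_mx 0 a + (c3 *: delta_mx 0 b + x)).
  by apply: (alg_aux _ _ _ _ _ _ h _ E1 E3); rewrite gt_eqF.
have k1 := H1 (c2 *: delta_mx 0 b + (c1 *: delta_mx 0 a + x)).
have k2 := H2 (c4 *: delta_mx 0 a + (c3 *: delta_mx 0 b + x)).
have q1 := le_lt_trans (dist_pt b a c2 c1 x) (dist_aux _ _ _ _ (cle_aux _ _ c2I) (cle_aux _ _ c1I) hd1).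
have q2 := le_lt_trans (dist_pt a b c4 c3 x) (dist_aux _ _ _ _ (cle_aux _ _ c4I) (cle_aux _ _ c3I) hd2).
exact: (tri_aux _ _ _ _ _ (k2 q2) (k1 q1) E).
Qed.


Lemma pd_cst (i : 'I_4) (c : R) (z : V) : pd i (fun _ : V => c) z = 0.
Proof. exact: derive_cst. Qed.

Lemma pd_scal (i : 'I_4) (c : R) (f : V -> R) (z : V) :
  derivable f z (delta_mx 0 i) -> pd i (fun y => c * f y) z = c * pd i f z.
Proof. move=> df; exact: deriveMl. Qed.

Lemma coord_der (i r : 'I_4) (q : V) : derivable (fun q : V => q 0 r) q (delta_mx 0 i).
Proof. apply: diff_derivable; exact: (differentiable_coord q 0 r). Qed.

Lemma pd_coord (i r : 'I_4) (q : V) : pd i (fun q : V => q 0 r) q = kd R r i.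
Proof.
have @f : {linear V -> R}.
  by exists (fun N : V => N 0 r); do 2![eexists]; do ?[constructor];
     rewrite ?mxE// => ? *; rewrite ?mxE//; move=> ?; rewrite !mxE.
rewrite /pd (_ : (fun _ => _) = f) //.
rewrite deriveE; last exact/linear_differentiable/coord_continuous.
rewrite diff_lin; last exact: coord_continuous.
rewrite /= mxE /kd eqxx /=.
by case: (r == i).
Qed.

Lemma dP_Cc (j k i m : 'I_4) (x p : V) : p 0 j != 0 -> p 0 k != 0 ->
  dP m (Cc j k i) x p = Cs R i j k * (kd R i m / (p 0 j * p 0 k)
     - p 0 i * (kd R j m * p 0 k + p 0 j * kd R k m) / (p 0 j * p 0 k) ^+ 2).
Proof.
move=> pj pk.
have dj := coord_der m j p; have dk := coord_der m k p; have di := coord_der m i p.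
pose F := (fun q : V => q 0 j) * (fun q : V => q 0 k).
have dF : derivable F p (delta_mx 0 m) by exact: (derivableM dj dk).
have F0 : F p != 0 by rewrite /F /= mulf_neq0.
have dG := derivableV F0 dF.
have dC : derivable (fun q : V => Cs R i j k * q 0 i) p (delta_mx 0 m).
  exact: (derivableM (derivable_cst (Cs R i j k) p (delta_mx 0 m)) di).
have eC : 'D_(delta_mx 0 m) (fun q : V => Cs R i j k * q 0 i) p = Cs R i j k * kd R i m.
  rewrite (deriveMl _ di); congr (_ * _); exact: pd_coord.
have eF : 'D_(delta_mx 0 m) F p = p 0 j * kd R k m + p 0 k * kd R j m.
  rewrite /F (deriveM dj dk); congr (_ * _ + _ * _); exact: pd_coord.
have eG := deriveV F0 dF.
rewrite eF in eG.
rewrite /dP /Cc.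
apply: etrans (deriveM dC dG) _.
have Fp : F p = p 0 j * p 0 k by [].
rewrite eG eC Fp /GRing.scale /=.
by field; rewrite pj pk.
Qed.
Variable sigma : V -> R.

Lemma deltaX_Hc (x p : V) (m a i j : 'I_4) :
  differentiable (sig1 sigma a) x ->
  deltaX sigma m (Hc sigma a i j) x p = 4 * kd R a i * kd R a j * sig2 sigma m a x.
Proof.
move=> da.
rewrite /deltaX /Hc.
rewrite (pd_scal _ _ _ _ (diff_derivable da)).
rewrite (pd_cst m (4 * kd R a i * kd R a j * sig1 sigma a x) p) mulr0 addr0.
by [].
Qed.

Lemma Rtor_eq (x p : V) (r j m : 'I_4) :
  differentiable (sig1 sigma r) x ->
  Rtor sigma r j m x p = 4 * p 0 r * (kd R r m * sig2 sigma j r x - kd R r j * sig2 sigma m r x)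
   + 16 * sig1 sigma r x * (sig1 sigma j x * p 0 j - sig1 sigma m x * p 0 m) * kd R r j * kd R r m.
Proof.
move=> dr.
have dd := fun i => @diff_derivable _ _ _ _ _ (delta_mx 0 i) dr.
have E1 : forall a b, pd a (fun y => Nc sigma r b y p) x = (- 4 * p 0 r * kd R r b) * sig2 sigma a r x.
  move=> a b; rewrite /Nc.
  rewrite (_ : (fun y => - 4 * sig1 sigma r y * p 0 r * kd R r b) =
     (fun y => (- 4 * p 0 r * kd R r b) * sig1 sigma r y)); last first.
    by apply/funext => y; rewrite -!mulrA; congr (_ * _); rewrite mulrC -mulrA.
  exact: (pd_scal _ _ _ _ (dd a)).
have E2 : forall a b, pd a (fun q => Nc sigma r b x q) p = (- 4 * sig1 sigma r x * kd R r b) * kd R r a.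
  move=> a b; rewrite /Nc.
  rewrite (_ : (fun q : V => - 4 * sig1 sigma r x * q 0 r * kd R r b) =
     (fun q : V => (- 4 * sig1 sigma r x * kd R r b) * q 0 r)); last first.
    by apply/funext => y; rewrite -!mulrA; congr (_ * _); congr (_ * _); rewrite mulrC.
  rewrite (pd_scal _ _ _ _ (coord_der a r p)).
  by rewrite pd_coord.
rewrite /Rtor /deltaX E1 E1 E2 E2.
set A := sig2 sigma j r x; set B := sig2 sigma m r x.
set sr := sig1 sigma r x; set sj := sig1 sigma j x; set sm := sig1 sigma m x.
ring.
Qed.

End Sch.

Theorem mainTheorem3 (R : realType) (U : set 'rV[R]_4) (sigma : 'rV[R]_4 -> R)
  (h : R -> R) (t : R) (x p : 'rV[R]_4) :
  open U -> smooth_on U sigma ->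
  ~ (exists c : R, forall y, U y -> sigma y = c) ->
  (forall s : R, 0 < h s) ->
  U x -> 0 < \prod_(i < 4) p 0 i ->
  (forall i j k l : 'I_4,
     [&& i != j, k != i, k != j, l != i, l != j & l != k] ->
     RicH sigma i j x p =
       - 2 * sig2 sigma i j x - p 0 i / p 0 k * sig2 sigma j k x
       - p 0 i / p 0 l * sig2 sigma j l x)
  /\ (forall i : 'I_4, RicH sigma i i x p = 0)
  /\ (forall i j : 'I_4,
        RicV i j x p = - Svert i j x p /\
        - Svert i j x p = (4 * kd R i j - 1) / 8 * (1 / (p 0 i * p 0 j))).
Proof.
move=> oU sm _ _ Ux hp.
have ds : forall a, differentiable (sig1 sigma a) x := fun a => sm [:: a] x Ux.
have Pnz : forall a, p 0 a != 0.
  move=> a; move: (lt0r_neq0 hp) => /prodf_neq0 H; exact: (H a isT).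
have Ssym : forall a b, sig2 sigma a b x = sig2 sigma b a x.
  move=> a b.
  have d0 : forall z, U z -> differentiable sigma z := fun z Uz => sm [::] z Uz.
  have da : forall z, U z -> differentiable (pd a sigma) z := fun z Uz => sm [:: a] z Uz.
  have db : forall z, U z -> differentiable (pd b sigma) z := fun z Uz => sm [:: b] z Uz.
  exact: (@schwarz R sigma U a b x oU Ux d0 da db (sm [:: a; b] x Ux) (sm [:: b; a] x Ux)).
have HR : forall i j, RicH sigma i j x p =
    @RHform R (fun a b => sig2 sigma a b x) (fun a => sig1 sigma a x) (fun a => p 0 a) i j.
  move=> i j; rewrite /RicH /RHform.
  congr (_ - _ + _ - _ + _).
  - by apply: eq_bigr => m _; rewrite (@deltaX_Hc R sigma x p m m i j (ds m)).
  - by apply: eq_bigr => m _; rewrite (@deltaX_Hc R sigma x p j m i m (ds m)).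
  - by apply: eq_bigr => m _; apply: eq_bigr => r _; rewrite (@Rtor_eq R sigma x p r j m (ds r)).
have HV : forall i j, Svert i j x p = @SVform R (fun a => p 0 a) i j.
  move=> i j; rewrite /Svert /SVform.
  congr (_ - _ + _ - _).
  - by apply: eq_bigr => m _; rewrite (@dP_Cc R i j m m x p (Pnz i) (Pnz j)).
  - by apply: eq_bigr => m _; rewrite (@dP_Cc R i m m j x p (Pnz i) (Pnz m)).
split; [|split].
- move=> i j k l H; rewrite HR.
  exact: (@horiz_off R (fun a b => sig2 sigma a b x) (fun a => sig1 sigma a x) (fun a => p 0 a) i j k l Ssym Pnz H).
- move=> i; rewrite HR.
  exact: (@horiz_diag R (fun a b => sig2 sigma a b x) (fun a => sig1 sigma a x) (fun a => p 0 a) i Ssym Pnz).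
- move=> i j; split; first by [].
  rewrite HV; exact: (@vert_alg R (fun a => p 0 a) i j Pnz).
Qed.
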